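(* Let $M$ be a uniformly discrete, bounded, separable pointed metric space and let $X\subset\mathrm{Lip}_0(M)$ be a Banach space such that $X^*=\mathcal F(M)$ isometrically. If for every $x\in M\setminus\{0\}$ the indicator function $\mathbf 1_{\{x\}}$ belongs to $X$, then $X$ is a natural predual of $\mathcal F(M)$. Moreover $0$ is the unique accumulation point of $\delta(M)$ in the $\sigma(\mathcal F(M),X)$ topology, and $X$ is isomorphic to $c_0$.
   Context: A pointed metric space $M$ has a distinguished origin $0$. $M$ is uniformly discrete if $\inf\{d(x,y):x\neq y\}>0$. $\mathrm{Lip}_0(M)$ is the Banach space of real Lipschitz functions on $M$ vanishing at $0$ with the best Lipschitz constant as norm; $\delta(x)$ is evaluation at $x$, and the Lipschitz free space $\mathcal F(M)$ is the closed linear span of $\delta(M)$ in $\mathrm{Lip}_0(M)^*$, with $\mathcal F(M)^*=\mathrm{Lip}_0(M)$. For bounded $M$, a Banach space $X\subset\mathrm{Lip}_0(M)$ is a natural predual of $\mathcal F(M)$ if $X^*=\mathcal F(M)$ isometrically and $\delta(M)$ is $\sigma(\mathcal F(M),X)$-closed. *)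

(* Defs.v *)
From mathcomp Require Import all_boot all_order all_algebra.
From mathcomp Require Import boolp classical_sets reals.
Set Implicit Arguments. Unset Strict Implicit. Unset Printing Implicit Defensive.
Import Order.TTheory GRing.Theory Num.Theory.
Local Open Scope ring_scope.
Local Open Scope classical_set_scope.

Section LipFree.
Context {R : realType} {T : Type} (d : T -> T -> R) (o : T).

Definition is_metric : Prop :=
  (forall x y, 0 <= d x y) /\ (forall x y, d x y = 0 <-> x = y) /\
  (forall x y, d x y = d y x) /\ (forall x y z, d x z <= d x y + d y z).

Definition uniformly_discrete : Prop :=
  exists theta : R, 0 < theta /\ forall x y, x <> y -> theta <= d x y.

Definition bounded_metric : Prop := exists B : R, forall x y, d x y <= B.

(** separable: a countable dense subset (M is nonempty, as it is pointed) *)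
Definition separable_metric : Prop :=
  exists s : nat -> T, forall x (e : R), 0 < e -> exists n, d x (s n) < e.

Definition infinite_space : Prop := forall n : nat, exists f : 'I_n -> T, injective f.

Definition Lip0 (f : T -> R) : Prop :=
  f o = 0 /\ exists C : R, forall x y, `|f x - f y| <= C * d x y.

Definition lipnorm (f : T -> R) : R :=
  sup [set r : R | exists x y, x <> y /\ r = `|f x - f y| / d x y].

(** functionals on Lip_0(M) are represented as maps (T -> R) -> R;
    only their values on Lip_0(M) matter. *)
Definition linear_on (A : set (T -> R)) (phi : (T -> R) -> R) : Prop :=
  forall (a : R) f g, A f -> A g ->
    phi (fun x => a * f x + g x) = a * phi f + phi g.

Definition bounded_on (A : set (T -> R)) (phi : (T -> R) -> R) : Prop :=
  exists C : R, forall f, A f -> `|phi f| <= C * lipnorm f.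

Definition dualnorm_on (A : set (T -> R)) (phi : (T -> R) -> R) : R :=
  sup [set r : R | exists f, A f /\ lipnorm f <= 1 /\ r = `|phi f|].

Definition dualnorm := dualnorm_on Lip0.

Definition delta (x : T) : (T -> R) -> R := fun f => f x.

Definition delta_comb (s : seq (R * T)) : (T -> R) -> R :=
  fun f => \sum_(p <- s) p.1 * f p.2.

(** F(M): closed linear span of delta(M) in Lip_0(M)^* *)
Definition inF (phi : (T -> R) -> R) : Prop :=
  linear_on Lip0 phi /\ bounded_on Lip0 phi /\
  forall e : R, 0 < e -> exists s : seq (R * T),
    dualnorm (fun f => phi f - delta_comb s f) <= e.

Definition feq (phi psi : (T -> R) -> R) : Prop :=
  forall f, Lip0 f -> phi f = psi f.

Definition banach_subspace (X : set (T -> R)) : Prop :=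
  (forall f, X f -> Lip0 f) /\ X (fun _ => 0) /\
  (forall (a : R) f g, X f -> X g -> X (fun x => a * f x + g x)) /\
  (forall f, Lip0 f ->
     (forall e : R, 0 < e -> exists g, X g /\ lipnorm (fun x => f x - g x) <= e) ->
     X f).

(** X^* = F(M) isometrically, via the canonical pairing <f, gamma> = gamma(f):
    the restriction map F(M) -> X^* is an isometry onto X^*. *)
Definition isometric_predual (X : set (T -> R)) : Prop :=
  (forall gamma, inF gamma -> dualnorm_on X gamma = dualnorm gamma) /\
  (forall psi, linear_on X psi -> bounded_on X psi ->
     exists gamma, inF gamma /\ forall f, X f -> gamma f = psi f).

(** gamma is in the sigma(F(M),X)-closure of delta(M) *)
Definition weak_closure_delta (X : set (T -> R)) (gamma : (T -> R) -> R) : Prop :=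
  forall (n : nat) (fs : 'I_n -> T -> R) (e : R), (forall i, X (fs i)) -> 0 < e ->
    exists x : T, forall i, `|fs i x - gamma (fs i)| < e.

(** gamma is a sigma(F(M),X)-accumulation point of delta(M) *)
Definition weak_accumulation_delta (X : set (T -> R)) (gamma : (T -> R) -> R) : Prop :=
  forall (n : nat) (fs : 'I_n -> T -> R) (e : R), (forall i, X (fs i)) -> 0 < e ->
    exists x : T, ~ feq (delta x) gamma /\ forall i, `|fs i x - gamma (fs i)| < e.

Definition natural_predual (X : set (T -> R)) : Prop :=
  isometric_predual X /\
  forall gamma, inF gamma -> weak_closure_delta X gamma ->
    exists x : T, feq gamma (delta x).

Definition indicator (x : T) : T -> R := fun y => if pselect (y = x) then 1 else 0.

End LipFree.

Definition c0 {R : realType} (u : nat -> R) : Prop :=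
  forall e : R, 0 < e -> exists N, forall n, (N <= n)%N -> `|u n| < e.

Definition supnorm {R : realType} (u : nat -> R) : R :=
  sup [set r : R | exists n, r = `|u n|].

Definition isomorphic_to_c0 {R : realType} {T : Type} (d : T -> T -> R)
    (X : set (T -> R)) : Prop :=
  exists Phi : (T -> R) -> (nat -> R),
    (forall f, X f -> c0 (Phi f)) /\
    (forall (a : R) f g, X f -> X g ->
       Phi (fun x => a * f x + g x) = (fun n => a * Phi f n + Phi g n)) /\
    (forall u, c0 u -> exists f, X f /\ Phi f = u) /\
    exists C1 C2 : R, 0 < C1 /\ 0 < C2 /\
      forall f, X f -> C1 * lipnorm d f <= supnorm (Phi f) /\
                       supnorm (Phi f) <= C2 * lipnorm d f.

(* Main.v *)
Require Import Defs.
From mathcomp Require Import all_boot all_order all_algebra.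
From mathcomp Require Import boolp classical_sets reals filter.
From mathcomp Require Import ring lra.
Set Implicit Arguments. Unset Strict Implicit. Unset Printing Implicit Defensive.
Import Order.TTheory GRing.Theory Num.Theory.
Local Open Scope ring_scope.
Local Open Scope classical_set_scope.

Section Basic.
Variables (R : realType) (T : Type) (d : T -> T -> R) (o : T).
Hypothesis Hmet : is_metric d.
Variables (th B : R) (a b : T).
Hypothesis th_gt0 : 0 < th.
Hypothesis th_le : forall x y, x <> y -> th <= d x y.
Hypothesis B_gt0 : 0 < B.
Hypothesis B_ge : forall x y, d x y <= B.
Hypothesis ab : a <> b.

Notation Lip0 := (Lip0 d o).
Notation lipnorm := (lipnorm d).

Lemma d_ge0 x y : 0 <= d x y. Proof. by case: Hmet. Qed.
Lemma d_xx x : d x x = 0. Proof. by case: Hmet => _ [/(_ x x) [_ ->]]. Qed.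
Lemma d_gt0 x y : x <> y -> 0 < d x y.
Proof. move=> /th_le h; exact: lt_le_trans th_gt0 h. Qed.

Lemma lip_bound f : Lip0 f -> forall x y, `|f x - f y| <= lipnorm f * d x y.
Proof.
move=> [fo [C HC]] x y.
case: (pselect (x = y)) => [->|nxy]; first by rewrite subrr normr0 d_xx mulr0.
have dp := d_gt0 nxy.
have ub : has_ubound [set r : R | exists x y, x <> y /\ r = `|f x - f y| / d x y].
  exists C => r [u [v [nuv ->]]].
  by rewrite ler_pdivrMr ?d_gt0 //; apply: HC.
have := ub_le_sup ub (ex_intro _ x (ex_intro _ y (conj nxy erefl))).
by rewrite -/(lipnorm f) ler_pdivrMr.
Qed.

Lemma lipnorm_ge0 f : Lip0 f -> 0 <= lipnorm f.
Proof.
move=> Lf; have := lip_bound Lf a b.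
have dp := d_gt0 ab => h.
have : 0 <= lipnorm f * d a b by exact: le_trans (normr_ge0 _) h.
by rewrite pmulr_lge0.
Qed.

Lemma abs_le_B f : Lip0 f -> forall x, `|f x| <= B * lipnorm f.
Proof.
move=> Lf x; have := lip_bound Lf x o; rewrite Lf.1 subr0 => h.
apply: le_trans h _; rewrite mulrC; apply: ler_wpM2r; first exact: lipnorm_ge0.
exact: B_ge.
Qed.

Lemma bounded_lip h (M : R) : h o = 0 -> (forall x, `|h x| <= M) ->
  Lip0 h /\ lipnorm h <= 2 * M / th.
Proof.
move=> ho hM.
have M0 : 0 <= M by have := hM o; rewrite ho normr0.
have K : forall x y, `|h x - h y| <= (2 * M / th) * d x y.
  move=> x y; case: (pselect (x = y)) => [->|nxy].
    by rewrite subrr normr0 d_xx mulr0.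
  apply: (le_trans (ler_normB _ _)).
  apply: (@le_trans _ _ (2 * M / th * th)).
    rewrite divfK ?gt_eqF //; have := hM x; have := hM y; lra.
  apply: ler_wpM2l; last exact: th_le.
  by apply: divr_ge0; [lra| exact: ltW].
split; first by split => //; exists (2 * M / th).
apply: ge_sup; first by exists (`|h a - h b| / d a b), a, b.
move=> r [x [y [nxy ->]]]; rewrite ler_pdivrMr ?d_gt0 //; exact: K.
Qed.

Lemma lin0 (A : set (T -> R)) phi : A (fun _ => 0) -> linear_on A phi -> phi (fun _ => 0) = 0.
Proof.
move=> A0 lin; have := lin 1 _ _ A0 A0.
have -> : (fun x : T => 1 * 0 + 0) = (fun _ => 0 :> R) by apply: funext => x; rewrite mul1r addr0.
rewrite mul1r; lra.
Qed.

Lemma Lip00 : Lip0 (fun _ => 0).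
Proof. by split => //; exists 0 => x y; rewrite subrr normr0 mul0r. Qed.

Lemma lip0_zero f : Lip0 f -> lipnorm f = 0 -> f = (fun _ => 0).
Proof.
move=> Lf L0; apply: funext => x; have := lip_bound Lf x o.
by rewrite L0 mul0r Lf.1 subr0 normr_le0 => /eqP.
Qed.

Lemma dual_bound phi : linear_on Lip0 phi ->
  (exists C, forall f, Lip0 f -> `|phi f| <= C * lipnorm f) ->
  forall f, Lip0 f -> `|phi f| <= dualnorm d o phi * lipnorm f.
Proof.
move=> lin [C HC] f Lf.
set D := [set r : R | exists f, Lip0 f /\ lipnorm f <= 1 /\ r = `|phi f|].
have ubD : has_ubound D.
  exists `|C| => r [g [Lg [g1 ->]]].
  apply: (le_trans (HC g Lg)).
  have := lipnorm_ge0 Lg; have := ler_norm C; have := normr_ge0 C; nra.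
have L0 := lipnorm_ge0 Lf.
case: (pselect (lipnorm f = 0)) => [Lz|Lnz].
  by rewrite Lz mulr0 (lip0_zero Lf Lz) (lin0 Lip00 lin) normr0.
have Lp : 0 < lipnorm f by rewrite lt_neqAle eq_sym; apply/andP; split => //; apply/eqP.
set h := fun x => (lipnorm f)^-1 * f x + (fun _ => 0) x.
have Lh : Lip0 h.
  apply: (proj1 (@bounded_lip h ((lipnorm f)^-1 * (B * lipnorm f)) _ _)).
    by rewrite /h Lf.1 mulr0 addr0.
  move=> x; rewrite /h addr0 normrM ger0_norm ?invr_ge0 //.
  by apply: ler_wpM2l; [rewrite invr_ge0|exact: abs_le_B].
have h1 : lipnorm h <= 1.
  apply: ge_sup; first by exists (`|h a - h b| / d a b), a, b.
  move=> r [x [y [nxy ->]]]; rewrite ler_pdivrMr ?d_gt0 // mul1r /h !addr0.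
  rewrite -mulrBr normrM ger0_norm ?invr_ge0 // ler_pdivrMl //.
  exact: lip_bound.
have := ub_le_sup ubD (ex_intro _ h (conj Lh (conj h1 erefl))).
rewrite /h lin //; last exact: Lip00.
rewrite (lin0 Lip00 lin) addr0 normrM ger0_norm ?invr_ge0 // -/(dualnorm d o phi).
by rewrite ler_pdivrMl // mulrC.
Qed.


Lemma comb_lin (s : seq (R * T)) : linear_on Lip0 (delta_comb s).
Proof.
move=> a' f g _ _; rewrite /delta_comb; elim: s => [|p s IH]; first by rewrite !big_nil; ring.
by rewrite !big_cons IH; ring.
Qed.

Lemma comb_bound (s : seq (R * T)) : exists C, forall f, Lip0 f -> `|delta_comb s f| <= C * lipnorm f.
Proof.
rewrite /delta_comb; elim: s => [|p s [C HC]].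
  by exists 0 => f _; rewrite big_nil normr0 mul0r.
exists (`|p.1| * B + C) => f Lf; rewrite big_cons.
apply: (le_trans (ler_normD _ _)); rewrite mulrDl -mulrA.
apply: lerD; last exact: HC.
by rewrite normrM; apply: ler_wpM2l => //; apply: abs_le_B.
Qed.

Lemma comb_vanish (s : seq (R * T)) f : (forall x, List.In x (map snd s) -> f x = 0) -> delta_comb s f = 0.
Proof.
rewrite /delta_comb; elim: s => [|p s IH] H; first by rewrite big_nil.
rewrite big_cons IH; last by move=> x hx; apply: H; right.
by rewrite H ?mulr0 ?addr0 //; left.
Qed.

Definition vanish_approx (phi : (T -> R) -> R) := forall e : R, 0 < e ->
  exists S : seq T, forall f, Lip0 f -> (forall x, List.In x S -> f x = 0) ->
    `|phi f| <= e * lipnorm f.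

Lemma F_vanish gamma : inF d o gamma -> vanish_approx gamma.
Proof.
move=> [lin [[Cg HCg] app]] e e0.
have [s hs] := app e e0.
set phi := fun f => gamma f - delta_comb s f.
have linp : linear_on Lip0 phi.
  move=> a' f g Lf Lg; rewrite /phi lin // comb_lin //; ring.
have bp : exists C, forall f, Lip0 f -> `|phi f| <= C * lipnorm f.
  have [Cs HCs] := comb_bound s.
  exists (Cg + Cs) => f Lf; rewrite /phi mulrDl.
  apply: (le_trans (ler_normB _ _)); apply: lerD; [exact: HCg|exact: HCs].
exists (map snd s) => f Lf van.
have := dual_bound linp bp Lf; rewrite /phi comb_vanish // subr0 => h.
apply: (le_trans h); apply: ler_wpM2r; first exact: lipnorm_ge0.
exact: hs.
Qed.

Definition off (y : T) (g : T -> R) : T -> R := fun x => if pselect (x = y) then 0 else g x.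
Fixpoint offl (S : seq T) (g : T -> R) : T -> R :=
  match S with nil => g | y :: S' => off y (offl S' g) end.

Lemma offl_o S g : g o = 0 -> offl S g o = 0.
Proof. elim: S => [|y S IH] //= go; rewrite /off; case: (pselect (o = y)) => hh //=; exact: IH. Qed.

Lemma offl_le S g x : `|offl S g x| <= `|g x|.
Proof.
elim: S => [|y S IH] //=; rewrite /off; case: (pselect (x = y)) => hh //.
by rewrite normr0.
Qed.

Lemma offl_in S g x : List.In x S -> offl S g x = 0.
Proof.
elim: S => [|y S IH] //= [yx|h]; rewrite /off; case: pselect => // nxy.
  by case: nxy.
exact: IH.
Qed.


Lemma indic_bound (x y : T) : `|indicator x y : R| <= 1.
Proof. by rewrite /indicator; case: pselect => hh; rewrite ?normr1 ?normr0. Qed.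

Lemma indic_o (x : T) : x <> o -> (indicator x o : R) = 0.
Proof. by move=> xo; rewrite /indicator; case: pselect => // h; case: xo. Qed.

Lemma indic_Lip (x : T) : x <> o -> Lip0 (indicator x).
Proof. move=> xo; exact: (proj1 (@bounded_lip _ 1 (indic_o xo) (indic_bound x))). Qed.

Lemma indic_xx (x : T) : (indicator x x : R) = 1.
Proof. by rewrite /indicator; case: pselect. Qed.

Lemma indic_neq (x y : T) : y <> x -> (indicator x y : R) = 0.
Proof. by rewrite /indicator; case: pselect. Qed.

Lemma small0 (x : R) : (forall e, 0 < e -> `|x| <= e) -> x = 0.
Proof.
move=> H; apply/eqP; rewrite -normr_le0.
case: (lerP `|x| 0) => // h; have := H _ (divr_gt0 h (ltr0Sn _ 1%N)).
lra.
Qed.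

Lemma Z phi : linear_on Lip0 phi -> vanish_approx phi ->
  (forall z, z <> o -> phi (@indicator R T z) = 0) -> forall f, Lip0 f -> phi f = 0.
Proof.
move=> lin van ind f Lf.
have step : forall g y, Lip0 g -> phi (off y g) = phi g.
  move=> g y Lg; case: (pselect (y = o)) => [->|yo].
    congr phi; apply: funext => x; rewrite /off; case: pselect => [xo|//] /=.
    by rewrite xo Lg.1.
  have Loff : Lip0 (off y g).
    apply: (proj1 (@bounded_lip _ (B * lipnorm g) _ _)).
      by rewrite /off; case: (pselect (o = y)) => hh //=; exact: Lg.1.
    move=> x; rewrite /off; case: (pselect (x = y)) => hh /=; last exact: abs_le_B.
    by rewrite normr0 mulr_ge0 ?lipnorm_ge0 // ltW.
  have eg : g = (fun x => g y * indicator y x + off y g x).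
    apply: funext => x; rewrite /off /indicator; case: (pselect (x = y)) => [xy|nxy] /=.
      by rewrite xy mulr1 addr0.
    by rewrite mulr0 add0r.
  rewrite [in X in _ = X]eg lin //; last exact: indic_Lip yo.
  transitivity (g y * 0 + phi (off y g)); first by rewrite mulr0 add0r.
  congr (_ * _ + _); symmetry; exact: ind y yo.
have LS : forall S, Lip0 (offl S f) /\ lipnorm (offl S f) <= 2 * (B * lipnorm f) / th.
  move=> S; apply: bounded_lip; first exact: offl_o Lf.1.
  move=> x; exact: le_trans (offl_le _ _ _) (abs_le_B Lf x).
have eqS : forall S, phi (offl S f) = phi f.
  elim => [|z S1 IH] //=; rewrite step ?IH //; exact: (LS S1).1.
apply: small0 => e e0.
set K := 2 * (B * lipnorm f) / th.
have K0 : 0 <= K by rewrite /K; apply: divr_ge0; [apply: mulr_ge0 => //; apply: mulr_ge0; [exact: ltW|exact: lipnorm_ge0]|exact: ltW].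
have [S HS] := van (e / (K + 1)) (divr_gt0 e0 (ltr_wpDl K0 ltr01)).
have := HS (offl S f) (LS S).1 (fun x => offl_in f (x:=x)).
rewrite eqS => h; apply: (le_trans h).
apply: (@le_trans _ _ (e / (K + 1) * (K + 1))); last by rewrite divfK // gt_eqF // ltr_wpDl.
apply: ler_wpM2l; first by apply: ltW; apply: divr_gt0 => //; rewrite ltr_wpDl.
have := (LS S).2; rewrite -/K; lra.
Qed.

Definition ulim (U : set_system T) (g : T -> R) : R := sup [set r : R | U [set x | r <= g x]].

Lemma ulim_spec (U : set_system T) (UF : UltraFilter U) g (M : R) :
  (forall x, `|g x| <= M) -> forall e : R, 0 < e -> U [set x | `|g x - ulim U g| < e].
Proof.
move=> gM e e0.
set S := [set r : R | U [set x | r <= g x]].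
have S0 : S (- M).
  rewrite /S /=; apply: filterE => x; have := gM x; rewrite ler_norml => /andP[h1 h2]; exact: h1.
have ubS : has_ubound S.
  exists M => r Sr; apply: contrapT => /negP; rewrite -ltNge => Mr.
  apply: (filter_not_empty U); apply: filterS Sr => x /= rx.
  have := gM x; rewrite ler_norml => /andP[? ?]; lra.
have hS : has_sup S by split => //; exists (- M).
have [r Sr lr] := sup_adherent e0 hS.
have nS : ~ S (ulim U g + e / 2).
  move=> Sl; have := ub_le_sup ubS Sl; rewrite -/(ulim U g).
  have : 0 < e / 2 by apply: divr_gt0.
  lra.
have Uc : U (~` [set x | ulim U g + e / 2 <= g x]).
  by case: (in_ultra_setVsetC [set x | ulim U g + e / 2 <= g x] UF).
apply: filterS (filterI Sr Uc) => x [/= rx nx].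
rewrite ltr_norml; move/negP: nx; rewrite -ltNge => nx.
rewrite -/(ulim U g) in lr.
have : 0 < e / 2 by apply: divr_gt0.
have : e / 2 < e by rewrite ltr_pdivrMr // ltr_pMr //; lra.
move=> ? ?; apply/andP; split; lra.
Qed.

Lemma ulim_unique (U : set_system T) (PF : ProperFilter U) g (l1 l2 : R) :
  (forall e : R, 0 < e -> U [set x | `|g x - l1| < e]) ->
  (forall e : R, 0 < e -> U [set x | `|g x - l2| < e]) -> l1 = l2.
Proof.
move=> h1 h2; apply: contrapT => ne.
have lt : 0 < `|l1 - l2| / 2 by apply: divr_gt0 => //; rewrite normr_gt0 subr_eq0; apply/eqP.
have [x [/= a1 a2]] := filter_ex (filterI (h1 _ lt) (h2 _ lt)).
move: a1 a2; rewrite !ltr_norml => /andP[a1l a1r] /andP[a2l a2r].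
have : `|l1 - l2| = l1 - l2 \/ `|l1 - l2| = - (l1 - l2).
  by case: (lerP 0 (l1 - l2)) => h; [left; rewrite ger0_norm | right; rewrite ltr0_norm].
by case=> hm; rewrite hm in a1l a1r a2l a2r lt; lra.
Qed.

Definition bnd (g : T -> R) := exists M : R, forall x, `|g x| <= M.

Lemma ulim_lin (U : set_system T) (UF : UltraFilter U) (c : R) f g :
  bnd f -> bnd g -> ulim U (fun x => c * f x + g x) = c * ulim U f + ulim U g.
Proof.
move=> [Mf hf] [Mg hg].
have bfg : forall x, `|c * f x + g x| <= `|c| * Mf + Mg.
  move=> x; apply: (le_trans (ler_normD _ _)); rewrite normrM.
  by apply: lerD => //; apply: ler_wpM2l.
apply: esym; apply: (@ulim_unique U _ (fun x => c * f x + g x)); last exact: (ulim_spec UF bfg).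
move=> e e0.
have e1p : 0 < e / (2 * (`|c| + 1)).
  by apply: divr_gt0 => //; apply: mulr_gt0 => //; apply: ltr_wpDl.
have e2p : 0 < e / 2 by apply: divr_gt0.
apply: filterS (filterI (ulim_spec UF hf e1p) (ulim_spec UF hg e2p)) => x [/= a1 a2].
have -> : c * f x + g x - (c * ulim U f + ulim U g) = c * (f x - ulim U f) + (g x - ulim U g) by ring.
apply: (le_lt_trans (ler_normD _ _)); rewrite normrM.
have q0 := normr_ge0 c.
have key : `|c| * (e / (2 * (`|c| + 1))) <= e / 2.
  have c1 : `|c| + 1 != 0 by rewrite gt_eqF // ltr_wpDl.
  have -> : `|c| * (e / (2 * (`|c| + 1))) = e / 2 * (`|c| / (`|c| + 1)) by field.
  apply: ler_piMr; first exact: ltW.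
  rewrite ler_pdivrMr ?mul1r ?ltr_wpDl //; lra.
have : `|c| * `|f x - ulim U f| <= `|c| * (e / (2 * (`|c| + 1))).
  by apply: ler_wpM2l => //; apply: ltW.
have : e / 2 + e / 2 = e by field.
lra.
Qed.

Lemma ulim_bound (U : set_system T) (UF : UltraFilter U) g (M : R) :
  (forall x, `|g x| <= M) -> `|ulim U g| <= M.
Proof.
move=> gM; case: (lerP `|ulim U g| M) => // h.
have e0 : 0 < `|ulim U g| - M by rewrite subr_gt0.
have [x /= hx] := filter_ex (ulim_spec UF gM e0).
have := gM x; rewrite ler_norml => /andP[m1 m2].
move: hx; rewrite ltr_norml => /andP[h1 h2].
have : `|ulim U g| = ulim U g \/ `|ulim U g| = - ulim U g.
  by case: (lerP 0 (ulim U g)) => h0; [left; rewrite ger0_norm | right; rewrite ltr0_norm].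
by case=> hm; rewrite hm in h1 h2 h e0; lra.
Qed.

Lemma In_nth (l : seq T) x : List.In x l -> exists k : 'I_(size l), nth o l k = x.
Proof.
elim: l => [|y l IH] //= [yx|h].
  by exists ord0.
have [k hk] := IH h; by exists (@Ordinal (size l).+1 k.+1 (ltn_ord k)).
Qed.

Lemma notin_exists : @infinite_space T -> forall l : seq T, exists x, ~ List.In x l.
Proof.
move=> inf l; have [f finj] := inf (size l).+1.
apply: contrapT => H.
have allin : forall i, exists k : 'I_(size l), nth o l k = f i.
  move=> i; apply: In_nth; apply: contrapT => ni; apply: H; by exists (f i).
have [g hg] := choice allin.
have ginj : injective g.
  by move=> i j gij; apply: finj; rewrite -hg -(hg j) gij.
by have := @leq_card _ _ g ginj; rewrite !card_ord ltnn.
Qed.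

Lemma free_ultra (A : set T) : (forall l : seq T, exists x, A x /\ ~ List.In x l) ->
  exists U : set_system T, UltraFilter U /\ U A /\ forall y, U [set x | x <> y].
Proof.
move=> hA.
set Bf := fun l : seq T => [set x | A x /\ ~ List.In x l].
have FF : Filter (filter_from setT Bf).
  apply: filter_fromT_filter; first by exists nil.
  move=> i j; exists (i ++ j) => x [Ax nij]; split; split => //.
    by move=> hi; apply: nij; apply: List.in_or_app; left.
  by move=> hj; apply: nij; apply: List.in_or_app; right.
have PF : ProperFilter (filter_from setT Bf).
  apply: filter_from_proper => i _; have [x hx] := hA i; by exists x.
have [G [UG sub]] := ultraFilterLemma PF.
exists G; split => //; split.
  by apply: sub; exists nil => // x [].
move=> y; apply: sub; exists [:: y] => // x [_ h] xy; apply: h; subst; by left.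
Qed.

Variable X : set (T -> R).
Hypothesis HX : banach_subspace d o X.
Hypothesis Hpre : isometric_predual d o X.
Hypothesis Hind : forall x : T, x <> o -> X (indicator x).

Lemma X_Lip f : X f -> Lip0 f. Proof. exact: HX.1. Qed.
Lemma X_bnd f : X f -> bnd f.
Proof. move=> Xf; exists (B * lipnorm f); exact: abs_le_B (X_Lip Xf). Qed.

Lemma ulim_indic (U : set_system T) (UF : UltraFilter U) (free : forall y, U [set x | x <> y]) z :
  ulim U (indicator z) = 0.
Proof.
apply: (@ulim_unique U _ (indicator z)); first exact: (ulim_spec UF (@indic_bound z)).
move=> e e0; apply: filterS (free z) => x /= xz.
by rewrite indic_neq // subr0 normr0.
Qed.

Lemma ultra_kills (U : set_system T) (UF : UltraFilter U) (free : forall y, U [set x | x <> y]) f :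
  X f -> forall e : R, 0 < e -> U [set x | `|f x| < e].
Proof.
move=> Xf e e0.
have linX : linear_on X (ulim U).
  move=> c g h Xg Xh; exact (ulim_lin UF c (X_bnd Xg) (X_bnd Xh)).
have bX : bounded_on d X (ulim U).
  exists B => g Xg; exact (ulim_bound UF (abs_le_B (X_Lip Xg))).
have [gamma [inFg eqg]] := Hpre.2 _ linX bX.
have ind : forall z, z <> o -> gamma (indicator z) = 0.
  by move=> z zo; rewrite eqg; [exact (ulim_indic UF free z)|exact: Hind].
have g0 := Z inFg.1 (F_vanish inFg) ind (X_Lip Xf).
have := ulim_spec UF (abs_le_B (X_Lip Xf)) e0.
by rewrite -eqg // g0; apply: filterS => x /=; rewrite subr0.
Qed.

Lemma X_c0 f : @infinite_space T -> X f -> forall e : R, 0 < e ->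
  exists l : seq T, forall x, e <= `|f x| -> List.In x l.
Proof.
move=> inf Xf e e0; apply: contrapT => H.
have hA : forall l : seq T, exists x, e <= `|f x| /\ ~ List.In x l.
  move=> l; apply: contrapT => nx; apply: H; exists l => x ex.
  apply: contrapT => nin; apply: nx; by exists x.
have [U [UF [UA free]]] := free_ultra hA.
have := ultra_kills UF free Xf e0.
move=> Ulow; have [x [/= h1 h2]] := filter_ex (filterI UA Ulow).
by move: h1; rewrite leNgt h2.
Qed.

Lemma a01 gamma y : weak_closure_delta X gamma -> y <> o ->
  gamma (indicator y) = 0 \/ gamma (indicator y) = 1.
Proof.
move=> wc yo; set c := gamma (indicator y).
have P : forall e : R, 0 < e -> `|1 - c| < e \/ `|0 - c| < e.
  move=> e e0; have [x hx] := wc 1%N (fun _ => indicator y) e (fun _ => Hind yo) e0.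
  have := hx ord0; rewrite /indicator; case: (pselect (x = y)) => hh /= h; [left|right]; exact: h.
apply: contrapT => /not_orP [c0 c1].
have p1 : 0 < `|c| by rewrite normr_gt0; apply/eqP.
have p2 : 0 < `|1 - c| by rewrite normr_gt0 subr_eq0; apply/eqP => h; apply: c1.
have [h1|h1] := P _ p1; last by move: h1; rewrite sub0r normrN ltxx.
have [h2|h2] := P _ p2; first by move: h2; rewrite ltxx.
move: h2; rewrite sub0r normrN => h2.
by have := lt_trans h1 h2; rewrite ltxx.
Qed.

Lemma two_ones gamma y z : weak_closure_delta X gamma -> y <> o -> z <> o ->
  gamma (indicator y) = 1 -> gamma (indicator z) = 1 -> y = z.
Proof.
move=> wc yo zo gy gz.
set fs := fun i : 'I_2 => if val i == 0%N then @indicator R T y else indicator z.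
have Xfs : forall i, X (fs i) by move=> i; rewrite /fs; case: ifP => _; exact: Hind.
have e0 : (0 : R) < 1 / 2 by apply: divr_gt0.
have [x hx] := wc 2%N fs _ Xfs e0.
have key : forall w, gamma (indicator w) = 1 -> `|indicator w x - gamma (indicator w)| < 1 / 2 -> x = w.
  move=> w gw; rewrite gw /indicator; case: (pselect (x = w)) => // _ /=.
  rewrite sub0r normrN normr1 => h; exfalso.
  have : (1 : R) / 2 < 1 by rewrite ltr_pdivrMr // mul1r ltr1n.
  by move=> h'; have := lt_trans h h'; rewrite ltxx.
have ey := key y gy (hx ord0).
have ez := key z gz (hx (@Ordinal 2 1 isT)).
by rewrite -ey -ez.
Qed.

Lemma closure_pt gamma : inF d o gamma -> weak_closure_delta X gamma ->
  exists x, feq d o gamma (delta x).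
Proof.
move=> inFg wc.
case: (pselect (exists y, y <> o /\ gamma (indicator y) <> 0)) => [[y [yo ny]]|none].
  have g1 : gamma (indicator y) = 1 by case: (a01 wc yo).
  exists y.
  set phi := fun f => gamma f - delta y f.
  have lin : linear_on Lip0 phi.
    by move=> c f g Lf Lg; rewrite /phi inFg.1 // /delta; ring.
  have van : vanish_approx phi.
    move=> e e0; have [S HS] := F_vanish inFg e0; exists (y :: S) => f Lf vn.
    rewrite /phi /delta (vn y (or_introl erefl)) subr0; apply: HS => // x hx; apply: vn; right.
    exact: hx.
  have ind : forall z, z <> o -> phi (indicator z) = 0.
    move=> z zo; rewrite /phi /delta; case: (pselect (z = y)) => [->|zy].
      by rewrite g1 indic_xx subrr.
    rewrite indic_neq; last by move=> yz; apply: zy.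
    have [->|gz1] := a01 wc zo; first by rewrite subr0.
    by case: zy; apply: two_ones wc zo yo gz1 g1.
  move=> f Lf; have := Z lin van ind Lf; rewrite /phi => /eqP; rewrite subr_eq0 => /eqP.
  done.
exists o => f Lf; rewrite /delta Lf.1.
apply: (Z inFg.1 (F_vanish inFg)) => // z zo; apply: contrapT => nz; apply: none; by exists z.
Qed.

Lemma acc0 : @infinite_space T -> weak_accumulation_delta d o X (fun _ => 0).
Proof.
move=> inf n fs e Xfs e0.
have hA : forall l : seq T, exists x, setT x /\ ~ List.In x l.
  by move=> l; have [x hx] := notin_exists inf l; exists x.
have [U [UF [_ free]]] := free_ultra hA.
have hall : U [set x | forall i, `|fs i x| < e].
  by apply: filter_forall => i; exact (ultra_kills UF free (Xfs i) e0).
have [x [/= hx xo]] := filter_ex (filterI hall (free o)).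
exists x; split.
  move=> H; have := H _ (indic_Lip xo); rewrite /delta indic_xx => /eqP.
  by rewrite oner_eq0.
by move=> i; rewrite subr0; exact: hx.
Qed.

Lemma acc_unique gamma : inF d o gamma -> weak_accumulation_delta d o X gamma ->
  feq d o gamma (fun _ => 0).
Proof.
move=> inFg wa.
have wc : weak_closure_delta X gamma.
  by move=> n fs e Xfs e0; have [x [_ h]] := wa n fs e Xfs e0; exists x.
have [y hy] := closure_pt inFg wc.
case: (pselect (y = o)) => [yo|yo].
  by move=> f Lf; rewrite (hy f Lf) /delta yo Lf.1.
exfalso.
have e0 : (0 : R) < 1 / 2 by apply: divr_gt0.
have [x [nf hx]] := wa 1%N (fun _ => indicator y) _ (fun _ => Hind yo) e0.
have g1 : gamma (indicator y) = 1 by rewrite (hy _ (indic_Lip yo)) /delta indic_xx.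
have xy : x = y.
  move: (hx ord0); rewrite g1 /indicator; case: (pselect (x = y)) => // _ /=.
  rewrite sub0r normrN normr1 => h.
  have : (1 : R) / 2 < 1 by rewrite ltr_pdivrMr // mul1r ltr1n.
  by move=> h'; have := lt_trans h h'; rewrite ltxx.
apply: nf => f Lf; rewrite (hy f Lf) xy //.
Qed.

Lemma c0_bnd (u : nat -> R) : c0 u -> exists M, forall n, `|u n| <= M.
Proof.
move=> cu; have [N hN] := cu 1 ltr01.
have pre : forall N, exists M, forall n, (n < N)%N -> `|u n| <= M.
  elim=> [|N' [M hM]]; first by exists 0.
  exists (Num.max M `|u N'|) => n; rewrite ltnS leq_eqVlt => /orP [/eqP ->|h].
    by rewrite le_max lexx orbT.
  by rewrite le_max hM.
have [M hM] := pre N; exists (Num.max M 1) => n.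
case: (ltnP n N) => h; first by rewrite le_max hM.
by rewrite le_max (ltW (hN n h)) orbT.
Qed.

Lemma foldr_max_in (h : T -> nat) (l : seq T) x :
  List.In x l -> (h x < foldr (fun y m => maxn (h y).+1 m) 0%N l)%N.
Proof.
elim: l => [|y l IH] //= [->|hh]; first by rewrite leq_maxl.
by apply: leq_trans (IH hh) _; rewrite leq_maxr.
Qed.

Definition psum (u : nat -> R) (t : nat -> T) (N : nat) : T -> R :=
  fun x => \sum_(k < N) u k * indicator (t k) x.

Lemma iso_c0 : @infinite_space T -> forall t : nat -> T, injective t -> (forall k, t k <> o) ->
  (forall x, x <> o -> exists k, t k = x) -> isomorphic_to_c0 d X.
Proof.
move=> inf t tinj tno tonto.
have htv : forall x, exists k, x <> o -> t k = x.
  move=> x; case: (pselect (x = o)) => [xo|xo]; first by exists 0%N.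
  by have [k hk] := tonto x xo; exists k.
have [tinv htinv] := choice htv.
have tinvK : forall k, tinv (t k) = k by move=> k; apply: tinj; apply: htinv.
exists (fun f n => f (t n)); split; [|split; [by []|split]].
- move=> f Xf e e0; have [l hl] := X_c0 inf Xf e0.
  set N := foldr (fun x m => maxn (tinv x).+1 m) 0%N l.
  have inN : forall x, List.In x l -> (tinv x < N)%N.
    by move=> x; apply: foldr_max_in.
  exists N => n Nn; rewrite ltNge; apply/negP => h.
  by have := inN _ (hl _ h); rewrite tinvK ltnNge Nn.
- move=> u cu; have [M hM] := c0_bnd cu.
  set f := fun x => if pselect (x = o) then 0 else u (tinv x).
  exists f; split; last first.
    apply: funext => n; rewrite /f; case: pselect => [h|nh]; [by case: (tno n)|by rewrite tinvK].
  have fo : f o = 0 by rewrite /f; case: pselect.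
  have ft : forall j, f (t j) = u j by move=> j; rewrite /f; case: pselect => [h|nh]; [case: (tno j)|rewrite tinvK].
  have M0 : 0 <= M by exact: le_trans (normr_ge0 _) (hM 0%N).
  have Lf : Lip0 f.
    apply: (proj1 (@bounded_lip f M fo _)) => x; case: (pselect (x = o)) => [->|xo].
      by rewrite fo normr0.
    by rewrite -(htinv x xo) ft.
  have ps_t : forall N j, psum u t N (t j) = if (j < N)%N then u j else 0.
    elim=> [|N IH] j; first by rewrite /psum big_ord0.
    have := IH j; rewrite /psum big_ord_recr /= => ->.
    case: (pselect (j = N)) => [->|jN].
      by rewrite ltnn indic_xx mulr1 add0r ltnSn.
    rewrite indic_neq; last by move=> /tinj.
    rewrite mulr0 addr0; congr (if _ then _ else _); symmetry.
    by rewrite ltnS (leq_eqVlt j N); case: eqP.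
  have ps_o : forall N, psum u t N o = 0.
    by move=> N; rewrite /psum big1 // => k _; rewrite indic_o // mulr0.
  have ps_X : forall N, X (psum u t N).
    elim=> [|N IH].
      have -> : psum u t 0 = (fun _ => 0) by apply: funext => x; rewrite /psum big_ord0.
      exact: HX.2.1.
    have -> : psum u t N.+1 = (fun x => u N * indicator (t N) x + psum u t N x).
      by apply: funext => x; rewrite /psum big_ord_recr /= addrC.
    by apply: HX.2.2.1 => //; apply: Hind.
  apply: HX.2.2.2 => // e e0.
  have e1 : 0 < e * th / 2 by apply: divr_gt0 => //; apply: mulr_gt0.
  have [N hN] := cu _ e1.
  exists (psum u t N); split => //.
  have hb : (fun x => f x - psum u t N x) o = 0 by rewrite /= fo ps_o subr0.
  have hM2 : forall x, `|(fun x => f x - psum u t N x) x| <= e * th / 2.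
    move=> x /=; case: (pselect (x = o)) => [->|xo]; first by rewrite fo ps_o subr0 normr0 ltW.
    rewrite -(htinv x xo) ft ps_t; case: ltnP => h.
      by rewrite subrr normr0 ltW.
    by rewrite subr0 ltW // hN.
  have := proj2 (bounded_lip hb hM2).
  have -> : 2 * (e * th / 2) / th = e by field; rewrite gt_eqF.
  done.
- exists (th / 2), B; split; first by apply: divr_gt0.
  split => // f Xf; have Lf := X_Lip Xf.
  set S := [set r : R | exists n, r = `|f (t n)|].
  have ubS : has_ubound S by exists (B * lipnorm f) => r [n ->]; exact: abs_le_B.
  have S0 : S !=set0 by exists `|f (t 0%N)|, 0%N.
  have supS : forall n, `|f (t n)| <= sup S by move=> n; exact (ub_le_sup ubS (ex_intro _ n erefl)).
  split.
    have := @bounded_lip f (sup S) Lf.1.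
    case => [x|_ h].
      case: (pselect (x = o)) => [->|xo]; last by rewrite -(htinv x xo).
      by rewrite Lf.1 normr0; exact: le_trans (normr_ge0 _) (supS 0%N).
    rewrite /supnorm -/S.
    apply: (@le_trans _ _ (th / 2 * (2 * sup S / th))); first by apply: ler_wpM2l => //; apply: ltW; apply: divr_gt0.
    by rewrite le_eqVlt; apply/orP; left; apply/eqP; field; rewrite gt_eqF.
  rewrite /supnorm -/S; apply: ge_sup => // r [n ->]; exact: abs_le_B.
Qed.

End Basic.

Lemma least (Q : nat -> Prop) : (exists n, Q n) -> exists n, Q n /\ forall k, Q k -> (n <= k)%N.
Proof.
move=> [n qn]; have exP : exists n, `[< Q n >] by exists n; apply/asboolP.
case: (ex_minnP exP) => m /asboolP Qm minm; exists m; split => // k Qk.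
by apply: minm; apply/asboolP.
Qed.

Fixpoint pre {T : Type} (s : nat -> T) (m : nat) : seq T :=
  match m with 0%N => [::] | m'.+1 => s m' :: pre s m' end.

Lemma pre_in {T : Type} (s : nat -> T) n m : (n < m)%N -> List.In (s n) (pre s m).
Proof.
elim: m => [|m IH] //=; rewrite ltnS leq_eqVlt => /orP [/eqP ->|h]; [left|right] => //.
exact: IH.
Qed.

Fixpoint tp (nx : nat -> nat) (k : nat) : nat :=
  match k with 0%N => nx 0%N | k'.+1 => nx (tp nx k').+1 end.

Section Enum.
Variables (T : Type) (o : T) (s : nat -> T).
Hypothesis surj : forall x, exists n, s n = x.
Hypothesis inf : forall l : seq T, exists x, ~ List.In x l.

Definition Pn n := s n <> o /\ forall m, (m < n)%N -> s m <> s n.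

Lemma minP x : x <> o -> exists n, s n = x /\ Pn n /\ forall k, s k = x -> (n <= k)%N.
Proof.
move=> xo; have [n [sn mn]] := least (surj x).
exists n; split => //; split => // ; split; first by rewrite sn.
move=> m mn' smn; have := mn m; rewrite smn sn => /(_ erefl).
by rewrite leqNgt mn'.
Qed.

Lemma P_inf m : exists n, (m <= n)%N /\ Pn n.
Proof.
have [x hx] := inf (o :: pre s m).
have xo : x <> o by move=> xo; apply: hx; left.
have [n [sn [Pn' _]]] := minP xo.
exists n; split => //; rewrite leqNgt; apply/negP => nm.
by apply: hx; right; rewrite -sn; apply: pre_in.
Qed.

Lemma enum_exists : exists t : nat -> T, injective t /\ (forall k, t k <> o) /\
  (forall x, x <> o -> exists k, t k = x).
Proof.
have hn : forall m, exists n, ((m <= n)%N /\ Pn n) /\ forall k, (m <= k)%N /\ Pn k -> (n <= k)%N.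
  by move=> m; apply: least; apply: P_inf.
have [nx hnx] := choice hn.
have tpP : forall k, Pn (tp nx k).
  by case=> [|k] /=; [have [[_ ?] _] := hnx 0%N | have [[_ ?] _] := hnx (tp nx k).+1].
have tplt : forall k, (tp nx k < tp nx k.+1)%N.
  by move=> k /=; have [[? _] _] := hnx (tp nx k).+1.
have tpmono : forall i j, (i < j)%N -> (tp nx i < tp nx j)%N.
  move=> i; elim=> [|j IH] //; rewrite ltnS leq_eqVlt => /orP [/eqP ->|h] //.
  exact: ltn_trans (IH h) (tplt j).
have tpge : forall k, (k <= tp nx k)%N.
  elim=> [|k IH] //; exact: leq_ltn_trans IH (tplt k).
have tponto : forall n, Pn n -> exists k, tp nx k = n.
  move=> n Pn'.
  have cl : forall k, (tp nx k <= n)%N \/ exists j, tp nx j = n.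
    elim=> [|k [h|h]]; [|  |by right].
    - by left; have [_ mn] := hnx 0%N; apply: mn.
    - move: h; rewrite leq_eqVlt => /orP [/eqP h|h]; first by right; exists k.
      by left; have [_ mn] := hnx (tp nx k).+1; apply: mn.
  have [h|//] := cl n.+1; by have := leq_trans (tpge n.+1) h; rewrite ltnn.
exists (fun k => s (tp nx k)); split; [|split].
- move=> i j eij; case: (ltngtP i j) => // h; exfalso.
    by have [_ hP] := tpP j; apply: (hP _ (tpmono _ _ h)).
  by have [_ hP] := tpP i; apply: (hP _ (tpmono _ _ h)); rewrite eij.
- by move=> k; have [] := tpP k.
- move=> x xo; have [n [sn [Pn' _]]] := minP xo.
  have [k hk] := tponto n Pn'; exists k; by rewrite hk.
Qed.

End Enum.

Theorem proposition3p8 (R : realType) (T : Type) (d : T -> T -> R) (o : T)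
  (X : set (T -> R)) :
  is_metric d -> uniformly_discrete d -> bounded_metric d -> separable_metric d ->
  @infinite_space T ->
  banach_subspace d o X -> isometric_predual d o X ->
  (forall x : T, x <> o -> X (indicator x)) ->
  natural_predual d o X /\
  (weak_accumulation_delta d o X (fun _ => 0%R) /\
   forall gamma, inF d o gamma -> weak_accumulation_delta d o X gamma ->
     feq d o gamma (fun _ => 0%R)) /\
  isomorphic_to_c0 d X.
Proof.
move=> Hmet [th [th0 thle]] [B0 HB0] [s Hs] inf HX Hpre Hind.
have B0ge : 0 <= B0 by apply: le_trans (HB0 o o); case: Hmet.
have Bgt : 0 < B0 + 1 by apply: ltr_wpDl.
have Bge : forall x y, d x y <= B0 + 1.
  by move=> x y; apply: le_trans (HB0 x y) _; rewrite lerDl.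
have [fab finj] := inf 2%N.
have ab : fab ord0 <> fab ord_max by move=> /finj.
have surj : forall x, exists n, s n = x.
  move=> x; have [n hn] := Hs x th th0; exists n; apply: contrapT => nx.
  have := thle x (s n) (fun h => nx (esym h)); rewrite leNgt hn.
  by [].
have notin := notin_exists o inf.
have [t [tinj [tno tonto]]] := enum_exists o surj notin.
split; first split => //.
  move=> gamma inFg wc; exact: (closure_pt Hmet th0 thle Bgt Bge ab Hind inFg wc).
split; last exact: (iso_c0 Hmet th0 thle Bgt Bge ab HX Hpre Hind inf tinj tno tonto).
split; first exact: (acc0 Hmet th0 thle Bgt Bge ab HX Hpre Hind inf).
move=> gamma inFg wa f Lf; exact: (acc_unique Hmet th0 thle Bgt Bge ab Hind inFg wa Lf).
Qed.
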